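(* If $P$ and $Q$ are partition polynomials, then the composition $P\circ Q$ is also a partition polynomial.
   Context: A polynomial $P(X)$ with integer coefficients is called a partition polynomial if it can be written in the form \[P(X)=a_nX^n + a_{n-1}X^{n-1}(1-X) + \cdots + a_0(1-X)^n\] for some integer $n\ge 0$ and some integers $a_0,\dots,a_n$ with $0\le a_i\le \binom{n}{i}$ for all $i\le n$. *)

(* Defs.v *)
From mathcomp Require Import all_boot all_order all_algebra.
Set Implicit Arguments. Unset Strict Implicit. Unset Printing Implicit Defensive.
Import Order.TTheory GRing.Theory Num.Theory.
Local Open Scope ring_scope.

Definition partition_poly (P : {poly int}) : Prop :=
  exists (n : nat) (a : nat -> int),
    (forall i : nat, (i <= n)%N -> 0 <= a i /\ a i <= ('C(n, i))%:Z) /\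
    P = \sum_(i < n.+1) (a i)%:P * 'X^i * (1 - 'X) ^+ (n - i).

(* Main.v *)
Require Import Defs.
From mathcomp Require Import all_boot all_order all_algebra.
From mathcomp Require Import zify ring.
Set Implicit Arguments. Unset Strict Implicit. Unset Printing Implicit Defensive.
Import Order.TTheory GRing.Theory Num.Theory.
Local Open Scope ring_scope.

Definition rep (N : nat) (a : nat -> int) : {poly int} :=
  \sum_(i < N.+1) (a i)%:P * 'X^i * (1 - 'X) ^+ (N - i).

Definition Cone (N : nat) (P : {poly int}) : Prop :=
  exists a : nat -> int, (forall i, (i <= N)%N -> 0 <= a i) /\ P = rep N a.

Lemma rep_sub N a b : rep N a - rep N b = rep N (fun i => a i - b i).
Proof.
rewrite /rep -sumrB; apply: eq_bigr => i _.
by rewrite polyCB !mulrBl.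
Qed.

Lemma rep_add N a b : rep N a + rep N b = rep N (fun i => a i + b i).
Proof.
rewrite /rep -big_split; apply: eq_bigr => i _.
by rewrite polyCD !mulrDl.
Qed.

Lemma rep_uniq N c : rep N c = 0 -> forall i, (i <= N)%N -> c i = 0.
Proof.
elim: N c => [|N IH] c.
  rewrite /rep big_ord1 /= expr0 !mulr1 => /eqP; rewrite polyC_eq0 => /eqP H i.
  by rewrite leqn0 => /eqP ->.
rewrite /rep big_ord_recl /= subn0 expr0 mulr1.
have E : \sum_(i < N.+1) (c (bump 0 i))%:P * 'X^(bump 0 i) * (1 - 'X) ^+ (N.+1 - bump 0 i)
   = 'X * rep N (fun i => c i.+1).
  rewrite /rep mulr_sumr; apply: eq_bigr => i _.
  by rewrite /bump /= add1n subSS exprS; rewrite !mulrA (mulrC 'X).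
rewrite E => H.
have c0 : c 0%N = 0.
  have := congr1 (fun p => p.[0]) H.
  rewrite !hornerE /=.
  by rewrite expr1n mulr1.
rewrite c0 polyC0 mul0r add0r in H.
move/eqP: H; rewrite mulf_eq0 polyX_eq0 /= => /eqP H.
case=> [|i] // Hi.
exact: (IH _ H i).
Qed.

Lemma Cone0 N : Cone N 0.
Proof.
exists (fun _ => 0); split => // ; rewrite /rep big1 // => i _.
by rewrite polyC0 !mul0r.
Qed.

Lemma ConeD N P R : Cone N P -> Cone N R -> Cone N (P + R).
Proof.
move=> [a [Ha ->]] [b [Hb ->]]; exists (fun i => a i + b i); split.
  by move=> i Hi; rewrite addr_ge0 ?Ha ?Hb.
by rewrite rep_add.
Qed.

Lemma Cone_sum N (I : finType) (F : I -> {poly int}) :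
  (forall i, Cone N (F i)) -> Cone N (\sum_i F i).
Proof.
move=> H; apply: (big_ind (Cone N)) => //; [exact: Cone0|exact: ConeD].
Qed.

Lemma Cone_basis N k c : (k <= N)%N -> 0 <= c ->
  Cone N (c%:P * 'X^k * (1 - 'X) ^+ (N - k)).
Proof.
move=> Hk Hc; exists (fun i => if i == k then c else 0); split.
  by move=> i _; case: ifP.
rewrite /rep (bigD1 (Ordinal (n:=N.+1) (m:=k) Hk)) //= eqxx big1 ?addr0 //.
move=> i /eqP Hi; case: ifP; last by rewrite polyC0 !mul0r.
by move/eqP => E; exfalso; apply: Hi; apply: val_inj.
Qed.

Lemma ConeZ N c P : 0 <= c -> Cone N P -> Cone N (c%:P * P).
Proof.
move=> Hc [a [Ha ->]]; exists (fun i => c * a i); split.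
  by move=> i Hi; rewrite mulr_ge0 ?Ha.
rewrite /rep mulr_sumr; apply: eq_bigr => i _.
by rewrite polyCM !mulrA.
Qed.

Lemma ConeM m N P R : Cone m P -> Cone N R -> Cone (m + N) (P * R).
Proof.
move=> [a [Ha ->]] [b [Hb ->]].
rewrite /rep mulr_suml; apply: Cone_sum => j.
rewrite mulr_sumr; apply: Cone_sum => i.
have Hj := ltn_ord j; have Hi := ltn_ord i.
have -> : (a j)%:P * 'X^j * (1 - 'X) ^+ (m - j) * ((b i)%:P * 'X^i * (1 - 'X) ^+ (N - i))
   = (a j * b i)%:P * 'X^(j + i) * (1 - 'X) ^+ (m + N - (j + i)).
  have -> : (m + N - (j + i) = (m - j) + (N - i))%N.
    rewrite ltnS in Hj Hi; lia.
  rewrite polyCM exprD exprD; ring.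
apply: Cone_basis; first by rewrite ltnS in Hj Hi; lia.
by rewrite mulr_ge0 ?Ha ?Hb // -ltnS.
Qed.

Lemma Cone1 : Cone 0 1.
Proof.
have := @Cone_basis 0 0 1 (leqnn 0) ler01.
by rewrite expr0 !mulr1.
Qed.

Lemma ConeX m P k : Cone m P -> Cone (m * k) (P ^+ k).
Proof.
move=> H; elim: k => [|k IH]; first by rewrite muln0 expr0; exact: Cone1.
by rewrite exprS mulnS; apply: ConeM.
Qed.

Lemma rep_one N : rep N (fun i => ('C(N, i))%:Z) = 1.
Proof.
have := exprDn (1 - 'X : {poly int}) 'X N.
rewrite subrK expr1n => ->; rewrite /rep; apply: eq_bigr => i _.
rewrite -mulr_natl -polyC_natr natz; ring.
Qed.

Lemma rep_comp n b Q : rep n b \Po Q =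
  \sum_(i < n.+1) (b i)%:P * Q ^+ i * (1 - Q) ^+ (n - i).
Proof.
rewrite /rep; apply: (big_ind2 (fun p r => p \Po Q = r)).
- by rewrite comp_poly0.
- by move=> x1 x2 y1 y2 <- <-; rewrite comp_polyD.
move=> i _.
by rewrite !comp_polyM comp_polyC !rmorphXn /= comp_polyB comp_polyX comp_polyC.
Qed.

Lemma Cone_comp n b m Q : (forall i, (i <= n)%N -> 0 <= b i) ->
  Cone m Q -> Cone m (1 - Q) -> Cone (m * n) (rep n b \Po Q).
Proof.
move=> Hb HQ HQ'; rewrite rep_comp; apply: Cone_sum => i.
have Hi := ltn_ord i; rewrite ltnS in Hi.
rewrite -mulrA; apply: ConeZ; first exact: Hb.
have -> : (m * n = m * i + m * (n - i))%N by rewrite -mulnDr subnKC.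
by apply: ConeM; apply: ConeX.
Qed.

Theorem mainTheorem3 (P Q : {poly int}) :
  partition_poly P -> partition_poly Q -> partition_poly (P \Po Q).
Proof.
move=> [n [a [Ha EP]]] [m [q [Hq EQ]]].
have EP' : P = rep n a by [].
have EQ' : Q = rep m q by [].
have HQ : Cone m Q by exists q; split => // i /Hq [].
have HQ' : Cone m (1 - Q).
  exists (fun i => ('C(m, i))%:Z - q i); split.
    by move=> i /Hq [_ H]; rewrite subr_ge0.
  by rewrite -rep_sub rep_one EQ'.
have C1 : Cone (m * n) (P \Po Q).
  by rewrite EP'; apply: Cone_comp => // i /Ha [].
have C2 : Cone (m * n) (1 - P \Po Q).
  have -> : 1 - P \Po Q = rep n (fun i => ('C(n, i))%:Z - a i) \Po Q.
    by rewrite -rep_sub rep_one -EP' comp_polyB comp_polyC.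
  by apply: Cone_comp => // i /Ha [_ H]; rewrite subr_ge0.
move: C1 C2 => [c [Hc E1]] [d [Hd E2]].
have U : rep (m * n) (fun i => (c i + d i) - ('C(m * n, i))%:Z) = 0.
  rewrite -rep_sub -rep_add -E1 -E2 rep_one comp_polyB -polyC1 comp_polyC polyC1; ring.
exists (m * n)%N, c; split => // i Hi; split; first exact: Hc.
have := rep_uniq U Hi; move/eqP; rewrite subr_eq0 => /eqP <-.
by rewrite lerDl Hd.
Qed.
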